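(* Let $a,b,k,\ell$ be positive integers with $\gcd(a,b)=1$. The number of pairs of integers $(\alpha,\beta)$ with $0\le\alpha<k$, $0\le\beta<\ell$ and $\gcd(k,\ell,a\beta-b\alpha)=1$ equals $$k\ell\,\frac{\varphi(\gcd(k,\ell))}{\gcd(k,\ell)},$$ where $\varphi$ is Euler's totient function. *)

(* Defs.v *)
From mathcomp Require Import all_boot all_order all_algebra.
Set Implicit Arguments. Unset Strict Implicit. Unset Printing Implicit Defensive.

(* Main.v *)
Require Import Defs.
From mathcomp Require Import all_boot all_order all_algebra.
From mathcomp Require Import ring.
Import GRing.Theory Num.Theory.

Lemma Qmod (g : nat) (z z' : int) : (g%:Z %| (z - z')%R)%Z ->
  coprime g (absz z) = coprime g (absz z').
Proof.
move=> h.
have e : gcdz g z = gcdz g z'.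
  by rewrite -gcdz_modr -[RHS]gcdz_modr; congr gcdz; apply/eqP; rewrite eqz_mod_dvd.
by move: e; rewrite /gcdz /coprime => /eqP; rewrite eqz_nat => /eqP ->.
Qed.

Lemma nat_dvd_eq (g x x' : nat) : (g%:Z %| (x%:Z - x'%:Z)%R)%Z -> x < g -> x' < g -> x = x'.
Proof.
move=> h hx hx'.
have : (x%:Z %% g)%Z = (x'%:Z %% g)%Z by apply/eqP; rewrite eqz_mod_dvd.
by rewrite !modz_nat !modn_small // => -[].
Qed.

Lemma sum_mod (g n : nat) (f : nat -> nat) : 0 < g -> g %| n ->
  \sum_(i < n) f (i %% g) = n %/ g * \sum_(i < g) f i.
Proof.
move=> g0 /dvdnP [m ->]; rewrite mulnK //.
rewrite -(big_mkord xpredT (fun i => f (i %% g))) -(big_mkord xpredT f).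
elim: m => [|m IH]; first by rewrite !mul0n big_geq.
rewrite mulSn (big_cat_nat _ (n:=g)) ?leq_addr //=.
rewrite [X in _ + X](_ : _ = \sum_(0 <= i < m * g) f ((i + g) %% g)); last first.
  by rewrite (big_addn 0 (g + m * g) g) addKn.
rewrite [X in _ + X](eq_bigr (fun i => f (i %% g))); last by move=> i _; rewrite modnDr.
rewrite IH mulSn; congr (_ + _).
by apply: eq_big_nat => i /andP[_ hi]; rewrite modn_small.
Qed.

Local Open Scope int_scope.
Lemma modabs (z : int) (g : nat) : 0 < g ->
  (absz (z %% g)%Z < g) /\ ((absz (z %% g)%Z)%:Z = (z %% g)%Z).
Proof.
move=> g0.
have ge0 : (0 <= (z %% g)%Z)%R by apply: modz_ge0; rewrite eqz_nat -lt0n.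
have lt : ((z %% g)%Z < g%:Z)%R by apply: ltz_pmod; rewrite ltz_nat.
have e : ((absz (z %% g)%Z)%:Z = (z %% g)%Z) by rewrite gez0_abs.
split=> //; by rewrite -ltz_nat e.
Qed.

Lemma core (a b g : nat) : 0 < g -> coprime a b ->
  \sum_(x < g) \sum_(y < g)
     (coprime g (absz ((a * y)%N%:Z - (b * x)%N%:Z)%R) : nat) = g * totient g.
Proof.
case: g => [//|n] _ hab.
have [u [v huv]] := Bezoutz a b.
move: huv; rewrite /gcdz /= (eqP hab) => huv.
pose h (p : 'I_n.+1 * 'I_n.+1) : 'I_n.+1 * 'I_n.+1 :=
  (inord (absz (((a * p.2)%N%:Z - (b * p.1)%N%:Z)%R %% n.+1)%Z),
   inord (absz ((u * p.1%:Z + v * p.2%:Z)%R %% n.+1)%Z)).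
have hinj : injective h.
  move=> [x y] [x' y'] [e1 e2].
  have d1 : (n.+1%:Z %| ((a * y)%N%:Z - (b * x)%N%:Z - ((a * y')%N%:Z - (b * x')%N%:Z))%R)%Z.
    rewrite -eqz_mod_dvd; apply/eqP.
    move/(congr1 (@nat_of_ord _)): e1; rewrite !inordK; try exact: (proj1 (modabs _ _ (ltn0Sn n))).
    move=> E; case: (modabs ((a * y)%N%:Z - (b * x)%N%:Z)%R _ (ltn0Sn n)) => _ e;
    case: (modabs ((a * y')%N%:Z - (b * x')%N%:Z)%R _ (ltn0Sn n)) => _ e'; by rewrite -e -e' E.
  have d2 : (n.+1%:Z %| ((u * x%:Z + v * y%:Z) - (u * x'%:Z + v * y'%:Z))%R)%Z.
    rewrite -eqz_mod_dvd; apply/eqP.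
    move/(congr1 (@nat_of_ord _)): e2; rewrite !inordK; try exact: (proj1 (modabs _ _ (ltn0Sn n))).
    move=> E; case: (modabs (u * x%:Z + v * y%:Z)%R _ (ltn0Sn n)) => _ e;
    case: (modabs (u * x'%:Z + v * y'%:Z)%R _ (ltn0Sn n)) => _ e'; by rewrite -e -e' E.
  have ex : (x%:Z - x'%:Z = - v * ((a * y)%N%:Z - (b * x)%N%:Z - ((a * y')%N%:Z - (b * x')%N%:Z))
        + a%:Z * ((u * x%:Z + v * y%:Z) - (u * x'%:Z + v * y'%:Z)))%R.
    rewrite !PoszM; transitivity ((u * a%:Z + v * b%:Z) * (x%:Z - x'%:Z))%R;
      first by rewrite huv mul1r.
    by ring.
  have ey : (y%:Z - y'%:Z = u * ((a * y)%N%:Z - (b * x)%N%:Z - ((a * y')%N%:Z - (b * x')%N%:Z))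
        + b%:Z * ((u * x%:Z + v * y%:Z) - (u * x'%:Z + v * y'%:Z)))%R.
    rewrite !PoszM; transitivity ((u * a%:Z + v * b%:Z) * (y%:Z - y'%:Z))%R;
      first by rewrite huv mul1r.
    by ring.
  have xx : x = x' :> nat.
    apply: (@nat_dvd_eq n.+1) => //; rewrite ex.
    by apply: rpredD; apply: dvdz_mull.
  have yy : y = y' :> nat.
    apply: (@nat_dvd_eq n.+1) => //; rewrite ey.
    by apply: rpredD; apply: dvdz_mull.
  by rewrite (val_inj xx) (val_inj yy).
rewrite pair_big /=.
rewrite (eq_bigr (fun p => (coprime n.+1 (h p).1 : nat))); last first.
  move=> [x y] _ /=; rewrite inordK; last exact: (proj1 (modabs _ _ (ltn0Sn n))).
  congr nat_of_bool; apply: Qmod.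
  by move: (eqz_mod_dvd n.+1 ((a * y)%N%:Z - (b * x)%N%:Z)%R (((a * y)%N%:Z - (b * x)%N%:Z)%R %% n.+1)%Z); rewrite modz_mod eqxx.
  
rewrite -(reindex_inj hinj (P := xpredT) (F := fun q : 'I_n.+1 * 'I_n.+1 => (coprime n.+1 q.1 : nat))).
rewrite -(pair_big xpredT xpredT (fun (s : 'I_n.+1) (t : 'I_n.+1) => (coprime n.+1 s : nat))) /=.
rewrite (eq_bigr (fun s : 'I_n.+1 => n.+1 * coprime n.+1 s)); last first.
  by move=> s _; rewrite sum_nat_const card_ord.
by rewrite -big_distrr totient_count_coprime big_mkord.
Qed.

Lemma Fmod (a b g x y : nat) :
  coprime g (absz ((a * y)%N%:Z - (b * x)%N%:Z)%R) =
  coprime g (absz ((a * (y %% g))%N%:Z - (b * (x %% g))%N%:Z)%R).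
Proof.
apply: Qmod.
rewrite {1}(divn_eq x g) {1}(divn_eq y g).
have -> : ((a * (y %/ g * g + y %% g))%N%:Z - (b * (x %/ g * g + x %% g))%N%:Z
   - ((a * (y %% g))%N%:Z - (b * (x %% g))%N%:Z))%R
   = (((a * (y %/ g))%N%:Z - (b * (x %/ g))%N%:Z) * g%:Z)%R.
  by rewrite !PoszM !PoszD !PoszM; ring.
by apply: dvdz_mull; apply: dvdzz.
Qed.
Local Close Scope int_scope.

Theorem mainTheorem17 (a b k l : nat) (ha : 0 < a) (hb : 0 < b)
    (hk : 0 < k) (hl : 0 < l) (hab : coprime a b) :
  #|[set p : 'I_k * 'I_l |
      gcdn (gcdn k l) `|((a * p.2)%N%:Z - (b * p.1)%N%:Z)%R|%N == 1]|
  = k * l * totient (gcdn k l) %/ gcdn k l.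
Proof.
set g := gcdn k l.
have g0 : 0 < g by rewrite gcdn_gt0 hk.
pose F (x y : nat) := (coprime g (absz ((a * y)%N%:Z - (b * x)%N%:Z)%R) : nat).
have e1 : #|[set p : 'I_k * 'I_l |
      gcdn g `|((a * p.2)%N%:Z - (b * p.1)%N%:Z)%R|%N == 1]|
   = \sum_(i < k) \sum_(j < l) F i j.
  rewrite pair_big /= -sum1_card big_mkcond /=; apply: eq_bigr => p _.
  by rewrite inE /F /coprime; case: (_ == 1).
rewrite e1.
rewrite (eq_bigr (fun i : 'I_k => l %/ g * \sum_(y < g) F (i %% g) y)); last first.
  move=> i _; rewrite -sum_mod ?dvdn_gcdr //; apply: eq_bigr => j _.
  by rewrite /F Fmod.
rewrite (@sum_mod g k (fun x => l %/ g * \sum_(y < g) F x y)) ?dvdn_gcdl //.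
rewrite -big_distrr /= core //.
have hk' : k = k %/ g * g by rewrite divnK ?dvdn_gcdl.
have hl' : l = l %/ g * g by rewrite divnK ?dvdn_gcdr.
have -> : k * l * totient g = k %/ g * (l %/ g * (g * totient g)) * g.
  rewrite [in LHS]hk' [in LHS]hl'; ring.
by rewrite mulnK.
Qed.
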